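(* For each positive integer $n$, the number of acyclic directed graphs on the vertex set $\{1,\dots,n\}$ is equal to the number of $n\times n$ matrices with entries in $\{0,1\}$ all of whose (complex) eigenvalues are positive real numbers.
   Context: A directed graph (digraph) on vertex set $\{1,\dots,n\}$ has, for each ordered pair $(i,j)$ with $1\le i,j\le n$, at most one edge directed from $i$ to $j$; loops (edges from $i$ to $i$) and pairs of opposite edges are permitted, parallel edges are not. A digraph is acyclic if it contains no directed cycle of any length, including cycles of length $1$ (loops) and length $2$. *)

(* Defs.v *)
From HB Require Import structures.
From mathcomp Require Import all_boot all_order all_algebra all_field.
Set Implicit Arguments. Unset Strict Implicit. Unset Printing Implicit Defensive.
Import Order.TTheory GRing.Theory Num.Theory.

(* A digraph on 'I_n (vertices 0..n-1, standing for 1..n) is its edge set: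
   a set of ordered pairs (i, j); loops and opposite pairs are allowed,
   parallel edges are impossible by construction. *)
Definition digraph (n : nat) := {set 'I_n * 'I_n}.

Definition edge_rel (n : nat) (E : digraph n) : rel 'I_n :=
  fun i j => (i, j) \in E.

(* Acyclic: no directed cycle of any length >= 1 (a cycle of length 1 is a
   loop, of length 2 a pair of opposite edges).  [cycle e (x :: p)] means
   x -> p_1 -> ... -> p_k -> x. *)
Definition acyclic (n : nat) (E : digraph n) : Prop :=
  forall (s : seq 'I_n), s != [::] -> ~~ cycle (edge_rel E) s.

Definition to_C (n : nat) (A : 'M[bool]_n) : 'M[algC]_n :=
  map_mx (fun b : bool => (b%:R : algC)%R) A.

(* All complex eigenvalues are positive real numbers.  In algC, 0 < z
   forces z to be real. *)
Definition all_eigs_pos (n : nat) (A : 'M[bool]_n) : Prop :=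
  forall z : algC, eigenvalue (to_C A) z -> (0 < z)%R.

From Stdlib Require Import ClassicalEpsilon.
Definition asb (P : Prop) : bool :=
  if excluded_middle_informative P then true else false.

(* Main.v *)
Require Import Defs.
From HB Require Import structures.
From mathcomp Require Import all_boot all_order all_algebra all_field.
From Stdlib Require Import ClassicalEpsilon.
Import Order.TTheory GRing.Theory Num.Theory.
Set Implicit Arguments. Unset Strict Implicit. Unset Printing Implicit Defensive.

Lemma path_nonuniq_cycle (T : eqType) (e : rel T) (p : seq T) (x : T) :
  path e x p -> ~~ uniq (x :: p) -> exists s, s != [::] /\ cycle e s.
Proof.
elim: p x => [|y p IH] x //; rewrite [uniq _]/=.
move=> hp; rewrite negb_and negbK => /orP[xin|nu].
  move: hp; case/splitPr: xin => p1 p2.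
  rewrite cat_path => /andP[h1 /= /andP[h2 _]].
  by exists (x :: p1); split => //=; rewrite rcons_path h1 h2.
move: hp => /andP[_ hp].
by apply: (IH y).
Qed.

Section Graph.
Variable n : nat.
Local Open Scope ring_scope.

Definition adjC (E : digraph n) : 'M[algC]_n := \matrix_(i, j) ((i, j) \in E)%:R.

Lemma walk (E : digraph n) k : forall i j, (adjC E ^+ k) i j != 0 ->
  exists p, [/\ size p = k, path (edge_rel E) i p & last i p = j].
Proof.
elim: k => [|k IH] i j.
  rewrite expr0 mxE; case: (eqVneq i j) => [-> _|_]; [by exists [::] | by rewrite mulr0n eqxx].
rewrite exprS mxE => nz.
have [l _ /=] : exists2 l, true & adjC E i l * (adjC E ^+ k) l j != 0.
  apply/exists_inP; apply: contraR nz => /exists_inPn h.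
  by rewrite big1 // => l _; apply/eqP; rewrite -[_ == _]negbK h.
rewrite mulf_eq0 negb_or mxE => /andP[eil /IH [p [sp pp lp]]].
exists (l :: p); split; rewrite /= ?sp ?lp //.
by rewrite pp andbT /edge_rel; move: eil; rewrite pnatr_eq0; case: ((i, l) \in E).
Qed.

Lemma nilp_acyclic (E : digraph n) : acyclic E -> adjC E ^+ n = 0.
Proof.
move=> ac; apply/matrixP => i j; rewrite mxE; apply/eqP/negP => /negP nz.
have [p [sp pp _]] := walk nz.
have [s [s0 cs]] : exists s, s != [::] /\ cycle (edge_rel E) s.
  apply: (path_nonuniq_cycle pp); apply/negP => /card_uniqP h.
  have := max_card (mem (i :: p)); rewrite h card_ord /= sp ltnn //.
by have := ac s s0; rewrite cs.
Qed.


Definition fmx (E : digraph n) : 'M[bool]_n :=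
  \matrix_(i, j) ((i == j) || ((i, j) \in E)).

Lemma noloop (E : digraph n) i : acyclic E -> (i, i) \notin E.
Proof. by move=> ac; have := ac [:: i] isT; rewrite /= /edge_rel andbT. Qed.

Lemma to_C_fmx (E : digraph n) : acyclic E -> to_C (fmx E) = 1%:M + adjC E.
Proof.
move=> ac; apply/matrixP => i j; rewrite !mxE.
case: (eqVneq i j) => [->|ne] /=; first by rewrite (negbTE (noloop j ac)) addr0.
by rewrite add0r.
Qed.

Lemma eig_fmx (E : digraph n) : acyclic E -> all_eigs_pos (fmx E).
Proof.
move=> ac z /eigenvalueP [v hv v0].
rewrite to_C_fmx // mulmxDr mul_mx_scalar scale1r in hv.
have hN : v *m adjC E = (z - 1) *: v by rewrite scalerBl scale1r -hv addrC addKr.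
have hk : forall k, v *m (adjC E ^+ k) = (z - 1) ^+ k *: v.
  elim=> [|k IH]; first by rewrite expr0 scale1r mulmx1.
  by rewrite exprSr -mulmxE mulmxA IH -scalemxAl hN scalerA -exprSr.
have := hk n; rewrite nilp_acyclic // mulmx0 => /esym/eqP.
rewrite scaler_eq0 (negbTE v0) orbF expf_eq0 => /andP[_ /eqP z1].
by have -> : z = 1 by apply/eqP; rewrite -subr_eq0 z1.
Qed.

Definition nonneg (M : 'M[algC]_n) := forall i j, 0 <= M i j.

Lemma nonneg_exp M k : nonneg M -> nonneg (M ^+ k).
Proof.
move=> hM; elim: k => [|k IH] i j.
  by rewrite expr0 mxE ler0n.
by rewrite exprS mxE sumr_ge0 // => l _; rewrite mulr_ge0.
Qed.

Lemma nonneg_mul_ge (P Q : 'M[algC]_n) x y z : nonneg P -> nonneg Q ->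
  P x y * Q y z <= (P *m Q) x z.
Proof.
move=> hP hQ; rewrite mxE (bigD1 y) //= lerDl sumr_ge0 // => l _.
by rewrite mulr_ge0.
Qed.

Lemma exp_diag (M : 'M[algC]_n) x m : nonneg M -> M x x ^+ m <= (M ^+ m) x x.
Proof.
move=> hM; elim: m => [|m IH]; first by rewrite !expr0 mxE eqxx.
rewrite !exprS; apply: le_trans (nonneg_mul_ge x x x hM (nonneg_exp m hM)).
by rewrite ler_wpM2l.
Qed.

Lemma path_ge1 (E : digraph n) p : forall i, path (edge_rel E) i p ->
  1 <= (adjC E ^+ size p) i (last i p).
Proof.
have hN : nonneg (adjC E) by move=> i j; rewrite mxE ler0n.
elim: p => [|y p IH] i /=; first by rewrite expr0 mxE eqxx.
move=> /andP[eiy pp]; rewrite exprS.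
apply: le_trans (nonneg_mul_ge i y (last y p) hN (nonneg_exp _ hN)).
rewrite mxE; move: eiy; rewrite /edge_rel => ->; rewrite mul1r; exact: IH.
Qed.

Lemma acyclic_nilp (E : digraph n) : adjC E ^+ n = 0 -> acyclic E.
Proof.
move=> h0 [|x p] // _; apply/negP; rewrite /cycle => /path_ge1.
rewrite size_rcons last_rcons => h1.
have hN : nonneg (adjC E) by move=> i j; rewrite mxE ler0n.
have := exp_diag x n (nonneg_exp (size p).+1 hN).
rewrite -exprM mulnC exprM h0 expr0n /= mxE.
have := exprn_ege1 n h1.
by move=> a b; have := le_trans a b; rewrite ler10.
Qed.

End Graph.
Local Open Scope ring_scope.

Lemma prodXsubC_coef (R : comNzRingType) (rs : seq R) : (0 < size rs)%N ->
  (\prod_(z <- rs) ('X - z%:P))`_(size rs).-1 = - \sum_(z <- rs) z.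
Proof.
elim: rs => [|z rs IH] // _.
rewrite big_cons big_cons /= mulrBl coefB coefXM coefCM.
case: rs IH => [|y rs] IH.
  by rewrite !big_nil /= coef1 mulr1 sub0r addr0.
rewrite [size _ == 0%N]/= IH //.
have := monic_prod_XsubC (y :: rs) predT (fun x : R => x) => /monicP.
rewrite /lead_coef size_prod_XsubC /= => ->; rewrite mulr1.
by rewrite opprD addrC.
Qed.

Lemma prodXsubC_at0 (R : comNzRingType) (rs : seq R) :
  (\prod_(z <- rs) ('X - z%:P)).[0] = (-1) ^+ size rs * \prod_(z <- rs) z.
Proof.
elim: rs => [|z rs IH]; first by rewrite !big_nil hornerC expr0 mulr1.
rewrite !big_cons hornerM IH hornerXsubC sub0r /= exprS.
by rewrite mulN1r !mulNr mulrCA.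
Qed.

Lemma prod_nseq (R : comNzRingType) (k : nat) (c : R) :
  \prod_(z <- nseq k c) ('X - z%:P) = ('X - c%:P) ^+ k.
Proof. by elim: k => [|k IH]; rewrite ?big_nil ?expr0 // big_cons IH exprS. Qed.

Lemma spec (m : nat) (A : 'M[bool]_m.+1) : all_eigs_pos A ->
  (forall i, A i i) /\ (to_C A - 1) ^+ m.+1 = 0.
Proof.
move=> H; set B := to_C A.
have [rs hrs] := closed_field_poly_normal (char_poly B).
rewrite (monicP (char_poly_monic B)) scale1r in hrs.
have hsz : size rs = m.+1.
  by have := size_char_poly B; rewrite hrs size_prod_XsubC => -[].
have hpos : forall z, z \in rs -> 0 < z.
  by move=> z zin; apply: H; rewrite eigenvalue_root_char hrs root_prod_XsubC.
have hdet : \det B = \prod_(z <- rs) z.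
  have := char_poly_det B; rewrite hrs -horner_coef0 prodXsubC_at0 hsz => h.
  by have := congr1 ( *%R ((-1) ^+ m.+1)) h; rewrite !signrMK.
have htr : \tr B = \sum_(z <- rs) z.
  have := prodXsubC_coef (rs := rs); rewrite hsz -hrs char_poly_trace // => h.
  by apply: oppr_inj; rewrite -h.
have hdet1 : 1 <= \det B.
  have eqB : B = map_mx (intr : int -> algC) (map_mx (fun b : bool => (b%:R : int)) A).
    by apply/matrixP => i j; rewrite !mxE; case: (A i j).
  have : 0 < \det B by rewrite hdet big_seq; apply: prodr_gt0 => z; exact: hpos.
  by rewrite eqB det_map_mx ltr0z ler1z gtz0_ge1.
pose E (i : 'I_m.+1) := rs`_i.
have hprod : \prod_(z <- rs) z = \prod_(i in predT) E i.
  by rewrite (big_nth 0) hsz big_mkord.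
have hsum : \sum_(z <- rs) z = \sum_(i in predT) E i.
  by rewrite (big_nth 0) hsz big_mkord.
have Ege0 : {in predT, forall i, 0 <= E i}.
  move=> i _; apply/ltW/hpos; rewrite /E mem_nth // hsz //.
have htrle : \tr B <= m.+1%:R.
  rewrite /mxtrace -[X in _ <= X%:R]card_ord -sumr_const; apply: ler_sum => i _.
  by rewrite mxE; case: (A i i).
have AGM := leif_AGM Ege0.
have hc : #|@predT 'I_m.+1| = m.+1.
  by rewrite -[RHS](card_ord m.+1); apply: eq_card => x.
rewrite hc -hsum -hprod -htr -hdet in AGM.
have mu1 : \tr B / m.+1%:R <= 1 by rewrite ler_pdivrMr ?ltr0Sn // mul1r.
have mu0 : 0 <= \tr B / m.+1%:R.
  by rewrite divr_ge0 // htr big_seq sumr_ge0 // => z /hpos/ltW.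
have hmun := exprn_ile1 m.+1 mu0 mu1.
have d1 : \det B = 1 by apply/eqP; rewrite eq_le hdet1 andbT (le_trans AGM.1 hmun).
have eqd : (\det B == (\tr B / m.+1%:R) ^+ m.+1).
  by rewrite eq_le AGM.1 d1 hmun.
have := AGM.2; rewrite eqd => /esym/forall_inP h.
have hE : forall i, E i = E ord0.
  by move=> i; apply/eqP; exact: (forall_inP (h i isT) ord0 isT).
have c1 : E ord0 = 1.
  have : E ord0 ^+ m.+1 = 1.
    by rewrite -d1 hdet hprod (eq_bigr _ (fun i _ => hE i)) prodr_const hc.
  by move/eqP; rewrite pexpr_eq1 //; [move/eqP | exact: (Ege0 ord0 isT)].
have hE1 : forall i, E i = 1 by move=> i; rewrite hE c1.
have trn : \tr B = m.+1%:R.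
  by rewrite htr hsum (eq_bigr _ (fun i _ => hE1 i)) sumr_const hc.
split.
  move=> i.
  have h0 : \sum_j (1 - B j j) = 0.
    by rewrite sumrB sumr_const card_ord -[\sum_j B j j]/(\tr B) trn subrr.
  have hnn : forall j, true -> 0 <= 1 - B j j.
    by move=> j _; rewrite subr_ge0 /B /to_C mxE; case: (A j j).
  have := psumr_eq0P hnn h0 isT.
  move=> /(_ i); rewrite /B /to_C mxE; case: (A i i) => // /eqP; rewrite subr0 oner_eq0 //.
have hrs1 : rs = nseq m.+1 1.
  rewrite -hsz; apply/all_pred1P/(all_nthP 0) => i; rewrite hsz => lti.
  by apply/eqP; exact: (hE1 (Ordinal lti)).
have := Cayley_Hamilton B.
by rewrite hrs hrs1 prod_nseq rmorphXn rmorphB /= horner_mx_X horner_mx_C.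
Qed.

Lemma asbP (P : Prop) : asb P = true <-> P.
Proof. by rewrite /asb; case: excluded_middle_informative. Qed.

Local Close Scope ring_scope.

Theorem theorem1 (n : nat) (hn : 0 < n) :
  #|[set E : digraph n | asb (acyclic E) ]| =
  #|[set A : 'M[bool]_n | asb (all_eigs_pos A) ]|.
Proof.
case: n hn => // m _.
set S := [set E : digraph m.+1 | asb (acyclic E)].
have inj : {in S &, injective (@fmx m.+1)}.
  move=> E1 E2; rewrite !inE => /asbP a1 /asbP a2 h.
  apply/setP => -[i j]; have := congr1 (fun M : 'M[bool]_m.+1 => M i j) h; rewrite !mxE /=.
  case: (eqVneq i j) => [->|//] _.
  by rewrite (negbTE (noloop j a1)) (negbTE (noloop j a2)).
rewrite -(card_in_imset inj); apply: eq_card => A; rewrite [in RHS]inE.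
apply/imsetP/idP.
  by move=> [E]; rewrite inE => /asbP ac ->; apply/asbP/eig_fmx.
move=> /asbP /spec [hd hN].
pose E : digraph m.+1 := [set p | (p.1 != p.2) && A p.1 p.2].
have hadj : adjC E = (to_C A - 1)%R.
  apply/matrixP => i j; rewrite !mxE inE /=.
  case: (eqVneq i j) => [->|ne] /=; first by rewrite hd GRing.subrr.
  by rewrite GRing.subr0.
exists E; last first.
  apply/matrixP => i j; rewrite !mxE inE /=.
  by case: (eqVneq i j) => [->|ne] /=; rewrite ?hd.
by rewrite inE; apply/asbP/acyclic_nilp; rewrite hadj.
Qed.
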